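(* Let $m\in\mathbf{N}\cup\{\infty\}$, let $G$ be a group of isometries of the hyperbolic space $\mathbb{H}_m$, and let $f\in G$ be a parabolic isometry, with fixed point $\xi\in\partial\mathbb{H}_m$. Assume: (i) there are constants $C>0$, $C'>0$ and a point $x_0\in\mathbb{H}_m$ such that ${\sf{dist}}(f^n(x_0),x_0)\ge C\log n-C'$ for all sufficiently large $n$; (ii) there is a horoball $B$ centered at $\xi$ such that for every $g\in G$, either $gB=B$ or $gB\cap B=\emptyset$. Then $f$ is at most $n^{2/C}$-distorted in $G$: for every finitely generated subgroup $\Gamma\le G$ containing $f$, $\delta^\Gamma_f(n)\preceq n^{2/C}$. In particular $C\le2$, and if $C=2$ then $f$ is undistorted in $G$.
   Context: Model of $\mathbb{H}_m$: let $\mathcal{H}$ be a real Hilbert space of dimension $m+1$ with a unit vector $\mathbf{e}_0$ and Hilbert basis $(\mathbf{e}_i)_{i\in I}$ of $\mathbf{e}_0^\perp$; set $\langle u|u'\rangle=a_0a'_0-\sum_ia_ia'_i$. $\mathbb{H}_m$ is the sheet of $\{\langle u|u\rangle=1\}$ containing $\mathbf{e}_0$, with $\cosh{\sf{dist}}(u,u')=\langle u|u'\rangle$; boundary points are isotropic rays. Isometries are the elements of ${\sf{O}}(\langle\cdot|\cdot\rangle)$ preserving this sheet; an isometry is parabolic if it fixes no point of $\mathbb{H}_m$ but fixes an isotropic line, and has translation length $\inf_x{\sf{dist}}(x,h(x))=0$. For a boundary point given by an isotropic vector $\xi$ (with $\langle \xi|\mathbf{e}_0\rangle>0$) and $\epsilon>0$,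 the horoball is $H_\xi(\epsilon)=\{v\in\mathbb{H}_m: 0<\langle v|\xi\rangle<\epsilon\}$; a horoball centered at $\xi$ is any such set. Distortion: $f\preceq g$ means $f(x)\le Cg(C'x)+C''$ for constants; $\delta_{c,S}(n)=\sup\{k: c^k\in S^n\}$ for a finite symmetric generating set $S\ni1$ of $\Gamma$, with $\simeq$-class $\delta^\Gamma_c$; $c$ is undistorted in $G$ if $\delta^\Gamma_c(n)\preceq n$ for all finitely generated $\Gamma\le G$ containing $c$. *)

(* Defs.v *)
From Stdlib Require Import Reals Lra.
Open Scope R_scope.

Record Hilbert := {
  hV :> Type;
  h0 : hV;
  hadd : hV -> hV -> hV;
  hopp : hV -> hV;
  hscal : R -> hV -> hV;
  hip : hV -> hV -> R;
  haddA : forall x y z, hadd x (hadd y z) = hadd (hadd x y) z;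
  haddC : forall x y, hadd x y = hadd y x;
  hadd0 : forall x, hadd x h0 = x;
  haddN : forall x, hadd x (hopp x) = h0;
  hscalA : forall a b x, hscal a (hscal b x) = hscal (a * b) x;
  hscal1 : forall x, hscal 1 x = x;
  hscalDv : forall a x y, hscal a (hadd x y) = hadd (hscal a x) (hscal a y);
  hscalDs : forall a b x, hscal (a + b) x = hadd (hscal a x) (hscal b x);
  hipC : forall x y, hip x y = hip y x;
  hipD : forall x y z, hip (hadd x y) z = hip x z + hip y z;
  hipZ : forall a x y, hip (hscal a x) y = a * hip x y;
  hip_pos : forall x, x <> h0 -> 0 < hip x x;
  hcomplete : forall u : nat -> hV,
    (forall eps, 0 < eps -> exists N, forall p q, (N <= p)%nat -> (N <= q)%nat ->
        sqrt (hip (hadd (u p) (hopp (u q))) (hadd (u p) (hopp (u q)))) < eps) ->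
    exists l, forall eps, 0 < eps -> exists N, forall p, (N <= p)%nat ->
        sqrt (hip (hadd (u p) (hopp l)) (hadd (u p) (hopp l))) < eps
}.

Arguments h0 {_}. Arguments hadd {_}. Arguments hopp {_}. Arguments hscal {_}.
Arguments hip {_}.

Section Hyp.
Variable H : Hilbert.
Variable e0 : H.   (* unit vector; coordinates a_0 = (u|e0), rest in e0^perp *)

(** Minkowski form <u|u'> = a0 a0' - sum_i a_i a_i'  (= 2 a0 a0' - (u|u')) *)
Definition mink (u v : H) : R := 2 * hip u e0 * hip v e0 - hip u v.

(** The sheet H_m of {<u|u> = 1} containing e0. *)
Definition hyp (u : H) : Prop := mink u u = 1 /\ 0 < hip u e0.

(** cosh dist(u,u') = <u|u'>, i.e. dist = arcosh <u|u'>. *)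
Definition hdist (u v : H) : R :=
  ln (mink u v + sqrt (mink u v ^ 2 - 1)).

(** Boundary points: isotropic vectors xi with <xi|e0> > 0 (representing rays). *)
Definition boundary_vec (xi : H) : Prop := mink xi xi = 0 /\ 0 < mink xi e0.

Definition horoball (xi : H) (eps : R) (v : H) : Prop :=
  hyp v /\ 0 < mink v xi /\ mink v xi < eps.

Definition linear_map (L : H -> H) : Prop :=
  forall a x y, L (hadd (hscal a x) y) = hadd (hscal a (L x)) (L y).

Definition isometry (L : H -> H) : Prop :=
  linear_map L /\
  (forall x y, L x = L y -> x = y) /\ (forall y, exists x, L x = y) /\
  (forall x y, mink (L x) (L y) = mink x y) /\
  (forall x, hyp x -> hyp (L x)).

Definition parabolic (f : H -> H) : Prop :=
  isometry f /\
  ~ (exists x, hyp x /\ f x = x) /\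
  (exists xi lam, xi <> h0 /\ mink xi xi = 0 /\ f xi = hscal lam xi) /\
  (forall eps, 0 < eps -> exists x, hyp x /\ hdist x (f x) < eps).

Definition fixes_boundary (f : H -> H) (xi : H) : Prop :=
  boundary_vec xi /\ exists lam, 0 < lam /\ f xi = hscal lam xi.

Definition isom_group (G : (H -> H) -> Prop) : Prop :=
  (forall g, G g -> isometry g) /\
  G (fun x => x) /\
  (forall g h, G g -> G h -> G (fun x => g (h x))) /\
  (forall g, G g -> exists h, G h /\ forall x, h (g x) = x /\ g (h x) = x).

Definition sym_gen (S : list (H -> H)) (g : H -> H) : Prop :=
  (forall x, g x = x) \/
  (exists s, List.In s S /\ forall x, g x = s x) \/
  (exists s, List.In s S /\ forall x, g (s x) = x /\ s (g x) = x).

Fixpoint word_ball (S : list (H -> H)) (n : nat) (g : H -> H) : Prop :=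
  match n with
  | O => forall x, g x = x
  | S n' => exists s h, sym_gen S s /\ word_ball S n' h /\ forall x, g x = s (h x)
  end.

(** delta^Gamma_f(n) <= A * (A' n)^p + A'' for every finitely generated
    subgroup Gamma = <S> of G containing f, i.e. delta^Gamma_f ≼ n^p. *)
Definition distortion_at_most (G : (H -> H) -> Prop) (f : H -> H) (p : R) : Prop :=
  forall S : list (H -> H), (forall s, List.In s S -> G s) ->
    (exists n, word_ball S n f) ->
    exists A A' A'', 0 < A /\ 0 < A' /\
      forall n k : nat, word_ball S n (Nat.iter k f) ->
        INR k <= A * Rpower (A' * INR n) p + A''.

Definition undistorted (G : (H -> H) -> Prop) (f : H -> H) : Prop :=
  forall S : list (H -> H), (forall s, List.In s S -> G s) ->
    (exists n, word_ball S n f) ->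
    exists A A' A'', 0 < A /\ 0 < A' /\
      forall n k : nat, word_ball S n (Nat.iter k f) ->
        INR k <= A * (A' * INR n) + A''.

End Hyp.

(* Main.v *)
Require Import Defs.
From Stdlib Require Import Reals Lra Classical List Arith.
Open Scope R_scope.

Arguments haddA {_}. Arguments haddC {_}. Arguments hadd0 {_}. Arguments haddN {_}.
Arguments hscalA {_}. Arguments hscal1 {_}. Arguments hscalDv {_}. Arguments hscalDs {_}.
Arguments hipC {_}. Arguments hipD {_}. Arguments hipZ {_}. Arguments hip_pos {_}.

Section LA.
Variable H : Hilbert.
Variable e0 : H.
Hypothesis he0 : hip e0 e0 = 1.

Lemma hip0l (z : H) : hip h0 z = 0.
Proof.
  assert (E : hip (hadd h0 h0) z = hip h0 z) by (rewrite hadd0; reflexivity).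
  rewrite hipD in E. lra.
Qed.

Lemma hip_nonneg (v : H) : 0 <= hip v v.
Proof.
  destruct (classic (v = h0)) as [->|n].
  - rewrite hip0l; lra.
  - left; apply hip_pos; auto.
Qed.

Lemma hipDr (x y z : H) : hip z (hadd x y) = hip z x + hip z y.
Proof. rewrite hipC, hipD, (hipC x), (hipC y); reflexivity. Qed.

Lemma hipZr (a : R) (x y : H) : hip y (hscal a x) = a * hip y x.
Proof. rewrite hipC, hipZ, hipC; reflexivity. Qed.

Definition Spf (x y : H) := hip x y - hip x e0 * hip y e0.

Lemma Sp_nonneg x : 0 <= Spf x x.
Proof.
  pose proof (hip_nonneg (hadd x (hscal (- hip x e0) e0))) as P.
  rewrite hipD, !hipDr, !hipZ, !hipZr, he0, (hipC e0 x) in P.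
  unfold Spf. nra.
Qed.

Lemma quad_disc (A B C : R) : 0 <= A -> 0 <= C ->
  (forall t, 0 <= A + 2 * B * t + C * t * t) -> B * B <= A * C.
Proof.
  intros HA HC Hq.
  destruct (Rle_lt_or_eq_dec 0 C HC) as [Cp|C0].
  - specialize (Hq (- B / C)).
    assert (E : A + 2 * B * (- B / C) + C * (- B / C) * (- B / C) = A - B * B / C)
      by (field; lra).
    rewrite E in Hq.
    assert (0 <= (A - B * B / C) * C) by (apply Rmult_le_pos; lra).
    assert (E2 : (A - B * B / C) * C = A * C - B * B) by (field; lra).
    lra.
  - subst C. destruct (Req_dec B 0) as [->|Bn]; [lra|].
    specialize (Hq (- (A + 1) / (2 * B))).
    assert (E : A + 2 * B * (- (A + 1) / (2 * B)) + 0 * (- (A + 1) / (2 * B)) * (- (A + 1) / (2 * B)) = -1)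
      by (field; lra).
    lra.
Qed.

Lemma Sp_CS x y : Spf x y * Spf x y <= Spf x x * Spf y y.
Proof.
  apply quad_disc; try apply Sp_nonneg.
  intro t. pose proof (Sp_nonneg (hadd x (hscal t y))) as P.
  unfold Spf in *. rewrite hipD, !hipDr, !hipZ, !hipZr, (hipC y x) in P.
  rewrite hipD, hipZ in P. nra.
Qed.

Local Notation mk := (mink H e0).

Lemma mk_addl x y z : mk (hadd x y) z = mk x z + mk y z.
Proof. unfold mink. rewrite !hipD. ring. Qed.
Lemma mk_scall a x z : mk (hscal a x) z = a * mk x z.
Proof. unfold mink. rewrite !hipZ. ring. Qed.
Lemma mk_sym x y : mk x y = mk y x.
Proof. unfold mink. rewrite (hipC x y). ring. Qed.
Lemma mk_addr x y z : mk z (hadd x y) = mk z x + mk z y.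
Proof. rewrite mk_sym, mk_addl, (mk_sym x), (mk_sym y). ring. Qed.
Lemma mk_scalr a x z : mk z (hscal a x) = a * mk z x.
Proof. rewrite mk_sym, mk_scall, mk_sym. ring. Qed.

Lemma mk_Sp x y : mk x y = hip x e0 * hip y e0 - Spf x y.
Proof. unfold mink, Spf. ring. Qed.

End LA.


Section XI.
Variable H : Hilbert.
Variable e0 : H.
Hypothesis he0 : hip e0 e0 = 1.
Variable xi : H.
Hypothesis hxi : boundary_vec H e0 xi.

Local Notation mk := (mink H e0).
Local Notation Sp := (Spf H e0).

Lemma c_pos : 0 < hip xi e0.
Proof. destruct hxi as [_ P]. unfold mink in P. rewrite he0 in P. lra. Qed.

Lemma Sp_xi : Sp xi xi = hip xi e0 * hip xi e0.
Proof. destruct hxi as [P _]. unfold mink in P. unfold Spf. lra. Qed.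

Lemma future_of q : mk q q = 1 -> 0 < mk q xi -> 0 < hip q e0.
Proof.
  intros H1 H2. rewrite mk_Sp in H1, H2.
  pose proof (Sp_CS H e0 he0 q xi) as CS. pose proof Sp_xi as SX. pose proof c_pos as cp.
  pose proof (Sp_nonneg H e0 he0 q) as Sq. 
  rewrite SX in CS.
  set (a := hip q e0) in *. set (c := hip xi e0) in *.
  set (s := Spf H e0 q xi) in *. set (sq := Spf H e0 q q) in *.
  destruct (Rle_or_lt a 0) as [Ha|Ha]; [|lra].
  exfalso.
  assert (s < a * c) by lra.
  assert (a * c <= 0) by nra.
  assert (a * c * (a * c) < s * s) by nra.
  nra.
Qed.

Lemma phi_pos q : hyp H e0 q -> 0 < mk q xi.
Proof.
  intros [H1 H2].  rewrite mk_Sp in H1 |- *.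
  pose proof (Sp_CS H e0 he0 q xi) as CS. pose proof Sp_xi as SX. pose proof c_pos as cp.
  pose proof (Sp_nonneg H e0 he0 q) as Sq. 
  rewrite SX in CS.
  set (a := hip q e0) in *. set (c := hip xi e0) in *.
  set (s := Spf H e0 q xi) in *. set (sq := Spf H e0 q q) in *.
  assert (s * s < (a * c) * (a * c)) by nra.
  assert (0 < a * c) by nra.
  nra.
Qed.

Lemma perp_neg z : mk z xi = 0 -> mk z z <= 0.
Proof.
  intros H1. rewrite mk_Sp in H1 |- *.
  pose proof (Sp_CS H e0 he0 z xi) as CS. pose proof Sp_xi as SX. pose proof c_pos as cp.
  pose proof (Sp_nonneg H e0 he0 z) as Sq. 
  rewrite SX in CS.
  set (a := hip z e0) in *. set (c := hip xi e0) in *.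
  set (s := Spf H e0 z xi) in *. set (sq := Spf H e0 z z) in *.
  assert (s = a * c) by lra. subst s.
  assert (c * c * (a * a) <= c * c * sq) by nra.
  assert (a * a <= sq).
  { apply Rmult_le_reg_l with (c * c); nra. }
  lra.
Qed.

Lemma CS_perp u v : mk u xi = 0 -> mk v xi = 0 -> mk u v * mk u v <= mk u u * mk v v.
Proof.
  intros Hu Hv.
  assert (Q : forall t, mk (hadd u (hscal t v)) (hadd u (hscal t v)) <= 0).
  { intro t. apply perp_neg. rewrite mk_addl, mk_scall.  rewrite Hu, Hv. ring. }
  assert (K : - mk u v * (- mk u v) <= (- mk u u) * (- mk v v)).
  { apply quad_disc.
    - pose proof (perp_neg u Hu); lra.
    - pose proof (perp_neg v Hv); lra.
    - intro t. specialize (Q t). rewrite !mk_addl, !mk_addr, !mk_scall, !mk_scalr in Q.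
      rewrite (mk_sym H e0 v u) in Q.  nra. }
  nra.
Qed.

Lemma construct y a : hyp H e0 y -> 0 < a ->
  let b := (1 - a * a) / (2 * a * mk y xi) in
  hyp H e0 (hadd (hscal a y) (hscal b xi)) /\ mk (hadd (hscal a y) (hscal b xi)) xi = a * mk y xi.
Proof.
  intros Hy Ha b. pose proof (phi_pos y Hy) as P.
  destruct Hy as [Y1 Y2]. 
  destruct hxi as [X1 X2]. 
  assert (E2 : mk (hadd (hscal a y) (hscal b xi)) xi = a * mk y xi).
  { rewrite mk_addl, !mk_scall.  rewrite X1. ring. }
  assert (E1 : mk (hadd (hscal a y) (hscal b xi)) (hadd (hscal a y) (hscal b xi)) = 1).
  { rewrite !mk_addl, !mk_addr, !mk_scall, !mk_scalr. 
    rewrite (mk_sym H e0 xi y).  rewrite X1, Y1. unfold b. field. lra. }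
  split; [|exact E2]. split; [exact E1|].
  apply future_of; [exact E1|]. rewrite E2. nra.
Qed.

End XI.


Section ISO.
Variable H : Hilbert.
Variable e0 : H.
Local Notation mk := (mink H e0).

Lemma iso_mk g x y : isometry H e0 g -> mk (g x) (g y) = mk x y.
Proof. intros (_&_&_&P&_). apply P. Qed.
Lemma iso_hyp g x : isometry H e0 g -> hyp H e0 x -> hyp H e0 (g x).
Proof. intros (_&_&_&_&P). apply P. Qed.
Lemma iso_inj g x y : isometry H e0 g -> g x = g y -> x = y.
Proof. intros (_&P&_). apply P. Qed.

Lemma iso_h0 g z : isometry H e0 g -> mk (g h0) z = 0.
Proof.
  intros (L&_). specialize (L 1 h0 h0). rewrite hscal1, hadd0 in L.
  assert (E : mk (g h0) z = mk (hadd (hscal 1 (g h0)) (g h0)) z) by (rewrite <- L; reflexivity).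
  rewrite mk_addl, mk_scall in E. lra.
Qed.

Lemma iso_lin g a b x y z : isometry H e0 g ->
  mk (g (hadd (hscal a x) (hscal b y))) z = a * mk (g x) z + b * mk (g y) z.
Proof.
  intros I. pose proof I as (L&_).
  rewrite L, mk_addl, mk_scall.
  pose proof (L b y h0) as L2. rewrite hadd0 in L2. rewrite L2, mk_addl, mk_scall, iso_h0; auto. ring.
Qed.

Definition Gx (G : (H -> H) -> Prop) (t : H -> H) := exists t', G t' /\ forall x, t x = t' x.

Lemma Gx_iso G t : isom_group H e0 G -> Gx G t -> isometry H e0 t.
Proof.
  intros (Gi&_) (t'&Gt&E).
  assert (I := Gi t' Gt). destruct I as (L&Inj&Sur&M&Hy).
  split; [|split; [|split; [|split]]].
  - intros a x y. rewrite !E. apply L.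
  - intros x y. rewrite !E. apply Inj.
  - intros y. destruct (Sur y) as [x Hx]. exists x. rewrite E. auto.
  - intros x y. rewrite !E. apply M.
  - intros x Hx. rewrite E. apply Hy; auto.
Qed.

Lemma Gx_G G t : G t -> Gx G t.
Proof. intros Gt. exists t. auto. Qed.

Lemma Gx_comp G t s : isom_group H e0 G -> Gx G t -> Gx G s -> Gx G (fun x => t (s x)).
Proof.
  intros (_&_&Gc&_) (t'&Gt&Et) (s'&Gs&Es). exists (fun x => t' (s' x)). split; auto.
  intros x. rewrite Es, Et. auto.
Qed.

Lemma sym_Gx G S s : isom_group H e0 G -> (forall s, In s S -> G s) -> sym_gen H S s -> Gx G s.
Proof.
  intros (_&Gid&_&Ginv) HS [E|[(s0&In0&E)|(s0&In0&E)]].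
  - exists (fun x => x). auto.
  - exists s0. auto.
  - destruct (Ginv s0 (HS s0 In0)) as (h&Gh&Eh). exists h. split; auto.
    intros x. destruct (Eh x) as [_ E2]. rewrite <- E2 at 1. destruct (E (h x)) as [E3 _]. auto.
Qed.

End ISO.


Lemma ln_le' x y : 0 < x -> x <= y -> ln x <= ln y.
Proof. intros hx [h|h]; [left; apply ln_increasing; auto|subst; lra]. Qed.

Lemma exp_le' x y : x <= y -> exp x <= exp y.
Proof. intros [h|h]; [left; apply exp_increasing; auto|subst; lra]. Qed.

Section Main.
Variable H : Hilbert.
Variable e0 : H.
Hypothesis he0 : hip e0 e0 = 1.
Variable G : (H -> H) -> Prop.
Hypothesis hG : isom_group H e0 G.
Variable f : H -> H.
Hypothesis hfG : G f.
Variable xi : H.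
Hypothesis hxi : fixes_boundary H e0 f xi.
Variable x0 : H.
Hypothesis hx0 : hyp H e0 x0.
Variable eps : R.
Hypothesis heps : 0 < eps.
Hypothesis hB : forall g, G g ->
      (forall v, (exists w, horoball H e0 xi eps w /\ g w = v) <-> horoball H e0 xi eps v) \/
      (forall v, ~ ((exists w, horoball H e0 xi eps w /\ g w = v) /\ horoball H e0 xi eps v)).

Local Notation mk := (mink H e0).
Local Notation phi v := (mink H e0 v xi).

Lemma bxi : boundary_vec H e0 xi.
Proof. exact (proj1 hxi). Qed.

Lemma G_iso g : G g -> isometry H e0 g.
Proof. destruct hG as [P _]. apply P. Qed.

Lemma phi_pos' v : hyp H e0 v -> 0 < phi v.
Proof. apply (phi_pos H e0 he0 xi bxi). Qed.

Lemma exists_pt c : 0 < c -> exists v, hyp H e0 v /\ phi v = c.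
Proof.
  intros hc. pose proof (phi_pos' x0 hx0) as P.
  destruct (construct H e0 he0 xi bxi x0 (c / phi x0) hx0) as [A1 A2].
  { apply Rdiv_lt_0_compat; auto. }
  eexists; split; [exact A1|]. rewrite A2. field. lra.
Qed.

Lemma f_xi : f xi = xi.
Proof.
  destruct hxi as [bv [lam [lp E]]].
  assert (Fi := G_iso f hfG).
  assert (K : forall v, lam * phi (f v) = phi v).
  { intro v. rewrite <- (iso_mk H e0 f v xi Fi), E, mk_scalr. ring. }
  assert (lam = 1).
  { destruct (hB f hfG) as [C1|C2].
    - destruct (Rtotal_order lam 1) as [Hl|[Hl|Hl]]; auto; exfalso.
      + destruct (exists_pt (lam * eps) ltac:(nra)) as (v&Hv&Pv).
        assert (Bv : horoball H e0 xi eps v) by (split; [auto|rewrite Pv; split; nra]).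
        assert (Bf : horoball H e0 xi eps (f v)) by (apply C1; eauto).
        destruct Bf as (_&_&Bf). specialize (K v). rewrite Pv in K.
        assert (phi (f v) = eps) by (apply Rmult_eq_reg_l with lam; lra). lra.
      + destruct (exists_pt eps heps) as (v&Hv&Pv).
        assert (Bf : horoball H e0 xi eps (f v)).
        { split; [apply iso_hyp; auto|]. specialize (K v). rewrite Pv in K.
          split; [apply phi_pos', iso_hyp; auto|]. nra. }
        apply C1 in Bf. destruct Bf as (w&Bw&Ew). apply (iso_inj H e0 f) in Ew; auto.
        subst w. destruct Bw as (_&_&Bw). lra.
    - exfalso. destruct (exists_pt (eps * lam / (1 + lam)) ltac:(apply Rdiv_lt_0_compat; nra)) as (v&Hv&Pv).
      apply (C2 (f v)). split.
      + exists v. split; auto. split; auto. rewrite Pv. split.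
        * apply Rdiv_lt_0_compat; nra.
        * apply Rmult_lt_reg_r with (1 + lam); [lra|]. unfold Rdiv. rewrite Rmult_assoc, Rinv_l; nra.
      + split; [apply iso_hyp; auto|]. split; [apply phi_pos', iso_hyp; auto|].
        specialize (K v). rewrite Pv in K.
        assert (phi (f v) = eps / (1 + lam)) by (apply Rmult_eq_reg_l with lam; [|lra]; rewrite K; field; lra).
        rewrite H0. apply Rmult_lt_reg_r with (1 + lam); [lra|]. unfold Rdiv. rewrite Rmult_assoc, Rinv_l; nra. }
  subst lam. rewrite E. apply hscal1.
Qed.


Lemma iter_G k : G (Nat.iter k f).
Proof.
  induction k as [|k IH].
  - change (G (fun x => x)). apply hG.
  - change (G (fun x => f (Nat.iter k f x))). apply hG; auto.
Qed.

Lemma iter_xi k : Nat.iter k f xi = xi.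
Proof. induction k as [|k IH]; simpl; auto. rewrite IH. apply f_xi. Qed.

Definition al := eps / phi x0.
Definition be := (1 - al * al) / (2 * al * phi x0).
Definition p := hadd (hscal al x0) (hscal be xi).

Lemma al_pos : 0 < al.
Proof. unfold al. apply Rdiv_lt_0_compat; auto. apply phi_pos'; auto. Qed.

Lemma p_hyp : hyp H e0 p /\ phi p = eps.
Proof.
  pose proof (phi_pos' x0 hx0).
  destruct (construct H e0 he0 xi bxi x0 al hx0 al_pos) as [A1 A2].
  split; [exact A1|]. unfold p, be. rewrite A2. unfold al. field. lra.
Qed.

Lemma horo_out t : G t -> eps <= phi (t p).
Proof.
  intros Gt. destruct p_hyp as [Hp Pp]. pose proof (G_iso t Gt) as It.
  destruct (Rle_or_lt eps (phi (t p))) as [ok|lt]; [exact ok|exfalso].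
  set (a := phi (t p)) in *.
  assert (apos : 0 < a) by (apply phi_pos', iso_hyp; auto).
  assert (Btp : horoball H e0 xi eps (t p)) by (split; [apply iso_hyp; auto|split; auto]).
  destruct (hB t Gt) as [C1|C2].
  - apply C1 in Btp. destruct Btp as (w&Bw&Ew). apply (iso_inj H e0 t) in Ew; auto.
    subst w. destruct Bw as (_&_&Bw). lra.
  - set (K := mink H e0 (t xi) xi).
    set (d := Rmin (1/2) ((eps - a) * eps / (4 * (Rabs K + 1)))).
    assert (dpos : 0 < d).
    { unfold d. apply Rmin_glb_lt; [lra|]. apply Rdiv_lt_0_compat; [nra|]. pose proof (Rabs_pos K). lra. }
    assert (dle : d <= 1/2) by apply Rmin_l.
    assert (dle2 : d <= (eps - a) * eps / (4 * (Rabs K + 1))) by apply Rmin_r.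
    set (a' := 1 - d).
    assert (a'pos : 0 < a') by (unfold a'; lra).
    destruct (construct H e0 he0 xi bxi p a' Hp a'pos) as [Q1 Q2].
    set (b := (1 - a' * a') / (2 * a' * phi p)) in *.
    set (q := hadd (hscal a' p) (hscal b xi)) in *.
    rewrite Pp in Q2.
    assert (Eb : b = d * (2 - d) / (2 * (1 - d) * eps)) by (unfold b, a'; rewrite Pp; field; lra).
    assert (b0 : 0 <= b) by (rewrite Eb; apply Rmult_le_pos; [nra|]; left; apply Rinv_0_lt_compat; nra).
    assert (b1 : b <= 2 * d / eps).
    { rewrite Eb. unfold Rdiv. apply Rmult_le_reg_r with (2 * (1 - d) * eps); [nra|].
      rewrite Rmult_assoc, Rinv_l by nra. rewrite Rmult_1_r.
      assert (E : 2 * d * / eps * (2 * (1 - d) * eps) = 4 * d * (1 - d)) by (field; lra).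
      rewrite E. nra. }
    assert (Etq : phi (t q) = a' * a + b * K).
    { unfold q. rewrite iso_lin; auto. }
    assert (bK : b * K <= 2 * d / eps * Rabs K).
    { apply Rle_trans with (b * Rabs K). { apply Rmult_le_compat_l; auto. apply RRle_abs. }
      apply Rmult_le_compat_r; auto. apply Rabs_pos. }
    assert (dK : 2 * d / eps * Rabs K < (eps - a) / 2).
    { assert (2 * d / eps * Rabs K <= 2 * ((eps - a) * eps / (4 * (Rabs K + 1))) / eps * Rabs K).
      { apply Rmult_le_compat_r; [apply Rabs_pos|]. unfold Rdiv. apply Rmult_le_compat_r; [left; apply Rinv_0_lt_compat; lra|]. lra. }
      assert (E : 2 * ((eps - a) * eps / (4 * (Rabs K + 1))) / eps * Rabs K = (eps - a) / 2 * (Rabs K / (Rabs K + 1))).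
      { field. pose proof (Rabs_pos K). lra. }
      assert (Rabs K / (Rabs K + 1) < 1).
      { pose proof (Rabs_pos K). apply Rmult_lt_reg_r with (Rabs K + 1); [lra|]. unfold Rdiv. rewrite Rmult_assoc, Rinv_l; lra. }
      assert ((eps - a) / 2 * (Rabs K / (Rabs K + 1)) < (eps - a) / 2).
      { pose proof (Rabs_pos K). assert (0 <= Rabs K / (Rabs K + 1)) by (apply Rmult_le_pos; [lra|left; apply Rinv_0_lt_compat; lra]). nra. }
      lra. }
    assert (a'a : a' * a <= a) by (unfold a'; nra).
    assert (Hq : horoball H e0 xi eps q) by (split; [auto|rewrite Q2; unfold a'; split; nra]).
    apply (C2 (t q)). split.
    + exists q. split; auto.
    + split; [apply iso_hyp; auto|]. split; [apply phi_pos', iso_hyp; auto|]. lra.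
Qed.

Lemma horo_out_x t : Gx H G t -> eps <= phi (t p).
Proof. intros (t'&Gt&E). rewrite E. apply horo_out; auto. Qed.


Definition Qv y z := 2 * mink H e0 y z / (phi y * phi z) - 1 / (phi y * phi y) - 1 / (phi z * phi z).

Definition dv y z := hadd (hscal (/phi y) y) (hscal (-1) (hscal (/phi z) z)).

Lemma dv_perp y z : hyp H e0 y -> hyp H e0 z -> mink H e0 (dv y z) xi = 0.
Proof.
  intros Hy Hz. pose proof (phi_pos' y Hy). pose proof (phi_pos' z Hz).
  unfold dv. rewrite mk_addl, !mk_scall. field. lra.
Qed.

Lemma Qv_eq y z : hyp H e0 y -> hyp H e0 z -> Qv y z = - mink H e0 (dv y z) (dv y z).
Proof.
  intros Hy Hz. pose proof (phi_pos' y Hy). pose proof (phi_pos' z Hz).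
  destruct Hy as [Y _]. destruct Hz as [Z _].
  unfold dv, Qv. rewrite !mk_addl, !mk_addr, !mk_scall, !mk_scalr, Y, Z, (mk_sym H e0 z y).
  field. lra.
Qed.

Lemma Qv_nonneg y z : hyp H e0 y -> hyp H e0 z -> 0 <= Qv y z.
Proof.
  intros Hy Hz. rewrite Qv_eq; auto.
  pose proof (perp_neg H e0 he0 xi bxi (dv y z) (dv_perp y z Hy Hz)). lra.
Qed.

Lemma Qv_tri y0 y1 y2 : hyp H e0 y0 -> hyp H e0 y1 -> hyp H e0 y2 ->
  sqrt (Qv y0 y2) <= sqrt (Qv y0 y1) + sqrt (Qv y1 y2).
Proof.
  intros H0 H1 H2.
  pose proof (phi_pos' y0 H0). pose proof (phi_pos' y1 H1). pose proof (phi_pos' y2 H2).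
  set (u := dv y0 y1). set (v := dv y1 y2).
  assert (E : Qv y0 y2 = - mink H e0 (hadd u v) (hadd u v)).
  { rewrite Qv_eq by auto.
    destruct H0 as [Y0 _]. destruct H1 as [Y1 _]. destruct H2 as [Y2 _].
    unfold u, v, dv. rewrite !mk_addl, !mk_addr, !mk_scall, !mk_scalr, Y0, Y1, Y2,
      (mk_sym H e0 y2 y0), (mk_sym H e0 y1 y0), (mk_sym H e0 y2 y1).
    field. lra. }
  assert (E2 : mink H e0 (hadd u v) (hadd u v) = mink H e0 u u + 2 * mink H e0 u v + mink H e0 v v).
  { rewrite !mk_addl, !mk_addr, (mk_sym H e0 v u). ring. }
  pose proof (CS_perp H e0 he0 xi bxi u v (dv_perp y0 y1 H0 H1) (dv_perp y1 y2 H1 H2)) as CS.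
  pose proof (Qv_eq y0 y1 H0 H1) as Q1. pose proof (Qv_eq y1 y2 H1 H2) as Q2.
  fold u in Q1. fold v in Q2.
  pose proof (Qv_nonneg y0 y1 H0 H1) as N1. pose proof (Qv_nonneg y1 y2 H1 H2) as N2.
  set (X := Qv y0 y1) in *. set (Y := Qv y1 y2) in *.
  assert (CS' : mink H e0 u v * mink H e0 u v <= X * Y) by nra.
  pose proof (sqrt_pos X). pose proof (sqrt_pos Y).
  assert (SX : sqrt X * sqrt X = X) by (apply sqrt_sqrt; auto).
  assert (SY : sqrt Y * sqrt Y = Y) by (apply sqrt_sqrt; auto).
  assert (A : - mink H e0 u v <= sqrt X * sqrt Y).
  { destruct (Rle_or_lt (- mink H e0 u v) 0); [nra|].
    apply Rsqr_incr_0_var; [|nra]. unfold Rsqr. nra. }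
  assert (Qv y0 y2 <= (sqrt X + sqrt Y) * (sqrt X + sqrt Y)) by nra.
  rewrite <- (sqrt_square (sqrt X + sqrt Y)) by lra.
  apply sqrt_le_1_alt. auto.
Qed.


Section Chain.
Variable S : list (H -> H).
Hypothesis HS : forall s, In s S -> G s.

Definition Msum := fold_right (fun s acc => Rabs (mink H e0 (s p) p) + acc) 0 S.
Definition Mb := 1 + Msum.

Lemma Msum_prop : 0 <= Msum /\ forall s, In s S -> Rabs (mink H e0 (s p) p) <= Msum.
Proof.
  unfold Msum. clear HS. induction S as [|a l IH]; simpl.
  - split; [lra|]. intros _ [].
  - destruct IH as [I1 I2]. pose proof (Rabs_pos (mink H e0 (a p) p)). split; [lra|].
    intros s [<-|Hs]; [lra|]. specialize (I2 s Hs). lra.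
Qed.

Lemma sym_bound s : sym_gen H S s -> Rabs (mink H e0 (s p) p) <= Mb.
Proof.
  destruct Msum_prop as [M0 M1]. unfold Mb.
  intros [E|[(s0&In0&E)|(s0&In0&E)]].
  - rewrite E. destruct p_hyp as [[P _] _]. rewrite P, Rabs_R1. lra.
  - rewrite E. specialize (M1 s0 In0). lra.
  - assert (I0 := G_iso s0 (HS s0 In0)).
    rewrite <- (iso_mk H e0 s0 (s p) p I0). destruct (E p) as [_ E1]. rewrite E1, mk_sym.
    specialize (M1 s0 In0). lra.
Qed.

Lemma wb_Gx n g : word_ball H S n g -> Gx H G g.
Proof.
  revert g. induction n as [|n IH]; intros g Hg; simpl in Hg.
  - exists (fun x => x). split; [apply hG|]. auto.
  - destruct Hg as (s&h&Hs&Hh&E).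
    destruct (Gx_comp H e0 G s h hG (sym_Gx H e0 G S s hG HS Hs) (IH h Hh)) as (c&Gc&Ec).
    exists c. split; auto. intros x. rewrite E, <- Ec. auto.
Qed.

Lemma step_bound t s : Gx H G t -> sym_gen H S s ->
  Qv (t (s p)) (t p) <= 2 * Mb / (eps * eps).
Proof.
  intros Gt Hs.
  assert (Gts : Gx H G (fun x => t (s x))) by (apply (Gx_comp H e0); auto; apply (sym_Gx H e0 G S); auto).
  pose proof (horo_out_x _ Gts) as A. pose proof (horo_out_x _ Gt) as B. simpl in A.
  pose proof (sym_bound s Hs) as Mbd.
  assert (It := Gx_iso H e0 G t hG Gt).
  unfold Qv. rewrite (iso_mk H e0 t (s p) p It).
  set (a := phi (t (s p))) in *. set (b := phi (t p)) in *.
  set (m := mink H e0 (s p) p) in *.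
  assert (ab : eps * eps <= a * b) by nra.
  assert (i1 : 0 <= 1 / (a * a)) by (apply Rlt_le, Rdiv_lt_0_compat; nra).
  assert (i2 : 0 <= 1 / (b * b)) by (apply Rlt_le, Rdiv_lt_0_compat; nra).
  assert (mM : m <= Mb) by (pose proof (RRle_abs m); lra).
  assert (M0 : 0 <= Mb) by (pose proof (Rabs_pos m); lra).
  assert (2 * m / (a * b) <= 2 * Mb / (a * b)).
  { unfold Rdiv. apply Rmult_le_compat_r; [left; apply Rinv_0_lt_compat; nra|lra]. }
  assert (2 * Mb / (a * b) <= 2 * Mb / (eps * eps)).
  { unfold Rdiv. apply Rmult_le_compat_l; [lra|]. apply Rinv_le_contravar; nra. }
  lra.
Qed.

Lemma chain n g : word_ball H S n g -> forall t, Gx H G t ->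
  sqrt (Qv (t (g p)) (t p)) <= INR n * sqrt (2 * Mb / (eps * eps)).
Proof.
  revert g. induction n as [|n IH]; intros g Hg t Gt; simpl in Hg.
  - rewrite Hg. unfold Qv. destruct p_hyp as [Hp _].
    pose proof (phi_pos' (t p) (iso_hyp H e0 t p (Gx_iso H e0 G t hG Gt) Hp)).
    destruct (iso_hyp H e0 t p (Gx_iso H e0 G t hG Gt) Hp) as [E _]. rewrite E.
    replace (2 * 1 / (phi (t p) * phi (t p)) - 1 / (phi (t p) * phi (t p)) - 1 / (phi (t p) * phi (t p))) with 0
      by (field; lra).
    rewrite sqrt_0. simpl. lra.
  - destruct Hg as (s&h&Hs&Hh&E).
    assert (Gts : Gx H G (fun x => t (s x))) by (apply (Gx_comp H e0); auto; apply (sym_Gx H e0 G S); auto).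
    specialize (IH h Hh _ Gts). simpl in IH.
    destruct p_hyp as [Hp _].
    assert (hy : forall u, Gx H G u -> hyp H e0 (u p)) by (intros u Gu; apply iso_hyp; auto; apply (Gx_iso H e0 G); auto).
    assert (Gh := wb_Gx n h Hh).
    assert (Gtsh : Gx H G (fun x => t (s (h x)))) by exact (Gx_comp H e0 G (fun x => t (s x)) h hG Gts Gh).
    rewrite E.
    pose proof (Qv_tri (t (s (h p))) (t (s p)) (t p) (hy _ Gtsh) (hy _ Gts) (hy _ Gt)) as T.
    pose proof (step_bound t s Gt Hs) as SB.
    assert (sqrt (Qv (t (s p)) (t p)) <= sqrt (2 * Mb / (eps * eps))) by (apply sqrt_le_1_alt; auto).
    rewrite S_INR. lra.
Qed.


Lemma key n k : word_ball H S n (Nat.iter k f) ->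
  1 <= mink H e0 (Nat.iter k f x0) x0 <= 1 + Mb / (al * al) * (INR n * INR n).
Proof.
  intros W.
  assert (Gid : Gx H G (fun x => x)) by (apply Gx_G; apply hG).
  pose proof (chain n _ W _ Gid) as Ch. simpl in Ch.
  set (F := Nat.iter k f) in *.
  assert (IF : isometry H e0 F) by apply G_iso, iter_G.
  destruct p_hyp as [Hp Pp].
  assert (HFp : hyp H e0 (F p)) by (apply iso_hyp; auto).
  assert (Fphi : forall v, phi (F v) = phi v).
  { intro v. pose proof (iso_mk H e0 F v xi IF) as T. unfold F in T |- *. rewrite iter_xi in T. exact T. }
  assert (PF : phi (F p) = eps) by (rewrite Fphi; auto).
  pose proof (Qv_nonneg (F p) p HFp Hp) as Qn.
  pose proof (phi_pos' x0 hx0) as P0. pose proof al_pos as alp.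
  assert (Mb0 : 0 <= Mb) by (pose proof (proj1 Msum_prop); unfold Mb; lra).
  assert (Qb : Qv (F p) p <= INR n * INR n * (2 * Mb / (eps * eps))).
  { pose proof (sqrt_pos (Qv (F p) p)). pose proof (pos_INR n).
    pose proof (sqrt_pos (2 * Mb / (eps * eps))) as K0.
    assert (Kq : sqrt (2 * Mb / (eps * eps)) * sqrt (2 * Mb / (eps * eps)) = 2 * Mb / (eps * eps)).
    { apply sqrt_sqrt. apply Rmult_le_pos; [lra|]. left; apply Rinv_0_lt_compat; nra. }
    rewrite <- (sqrt_sqrt (Qv (F p) p)) by auto. rewrite <- Kq.
    assert (0 <= INR n * sqrt (2 * Mb / (eps * eps))) by nra.
    nra. }
  assert (Em : mink H e0 (F p) p = al * al * mink H e0 (F x0) x0 + 2 * al * be * phi x0).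
  { unfold p at 1. rewrite iso_lin by auto. unfold F. rewrite iter_xi. fold F.
    unfold p. rewrite !mk_addr, !mk_scalr.
    rewrite Fphi.
    rewrite (mk_sym H e0 xi x0). destruct bxi as [X _]. rewrite X. ring. }
  assert (Ebe : al * al + 2 * al * be * phi x0 = 1) by (unfold be; field; lra).
  unfold Qv in Qb, Qn. rewrite PF, Pp, Em in Qb, Qn.
  set (m := mink H e0 (F x0) x0) in *.
  assert (E1 : 2 * (al * al * m + 2 * al * be * phi x0) / (eps * eps) - 1 / (eps * eps) - 1 / (eps * eps)
     = 2 * al * al * (m - 1) / (eps * eps)) by (replace (2 * al * be * phi x0) with (1 - al * al) by lra; field; lra).
  rewrite E1 in Qb, Qn.
  assert (Qn' : 0 <= 2 * al * al * (m - 1)).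
  { apply Rmult_le_reg_r with (/ (eps * eps)). apply Rinv_0_lt_compat; nra. rewrite Rmult_0_l. exact Qn. }
  assert (Qb' : 2 * al * al * (m - 1) <= INR n * INR n * (2 * Mb)).
  { apply Rmult_le_reg_r with (/ (eps * eps)). apply Rinv_0_lt_compat; nra.
    unfold Rdiv in Qb. eapply Rle_trans; [|eapply Rle_trans; [exact Qb|right; ring]]; right; ring. }
  split.
  - assert (0 <= m - 1); [|lra].
    apply Rmult_le_reg_l with (2 * al * al); [nra|]. lra.
  - assert (m - 1 <= Mb / (al * al) * (INR n * INR n)); [|lra].
    apply Rmult_le_reg_l with (2 * al * al); [nra|].
    replace (2 * al * al * (Mb / (al * al) * (INR n * INR n))) with (INR n * INR n * (2 * Mb)) by (field; lra).
    exact Qb'.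
Qed.


Lemma final_bound (C C' : R) (N : nat) (hC : 0 < C)
  (hgr : forall k, (N <= k)%nat -> hdist H e0 (Nat.iter k f x0) x0 >= C * ln (INR k) - C') :
  exists A, 0 < A /\ forall n k, word_ball H S n (Nat.iter k f) ->
    INR k <= A * Rpower (1 * INR n) (2 / C) + (A + INR N).
Proof.
  set (c := Mb / (al * al)).
  assert (c0 : 0 <= c).
  { unfold c. pose proof al_pos. assert (0 <= Mb) by (pose proof (proj1 Msum_prop); unfold Mb; lra).
    apply Rmult_le_pos; [lra|]. left; apply Rinv_0_lt_compat; nra. }
  set (A := exp ((C' + ln (2 + 2 * c)) / C)).
  exists A. split; [apply exp_pos|].
  intros n k W.
  assert (Rp : 0 < Rpower (1 * INR n) (2 / C)) by apply exp_pos.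
  assert (A0 : 0 < A) by apply exp_pos.
  pose proof (pos_INR N).
  destruct (le_lt_dec N k) as [Nk|kN]; [|apply lt_INR in kN; nra].
  destruct k as [|k']; [simpl; nra|].
  set (k := Datatypes.S k') in *.
  assert (k1 : 1 <= INR k) by (unfold k; rewrite S_INR; pose proof (pos_INR k'); lra).
  specialize (hgr k Nk). destruct (key n k W) as [m1 m2]. fold c in m2.
  unfold hdist in hgr. set (m := mink H e0 (Nat.iter k f x0) x0) in *.
  assert (sq : sqrt (m ^ 2 - 1) <= m).
  { rewrite <- (sqrt_pow2 m) at 2 by lra. apply sqrt_le_1_alt. lra. }
  pose proof (sqrt_pos (m ^ 2 - 1)).
  assert (L1 : ln (m + sqrt (m ^ 2 - 1)) <= ln (2 + 2 * c * (INR n * INR n))).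
  { apply ln_le'; [lra|]. lra. }
  assert (lnk : C * ln (INR k) - C' <= ln (2 + 2 * c * (INR n * INR n))) by lra.
  assert (kexp : INR k = exp (ln (INR k))) by (rewrite exp_ln; lra).
  destruct n as [|n'].
  - change (INR 0) with 0 in lnk. replace (2 + 2 * c * (0 * 0)) with 2 in lnk by ring.
    assert (ln 2 <= ln (2 + 2 * c)) by (apply ln_le'; lra).
    assert (ln (INR k) <= (C' + ln (2 + 2 * c)) / C).
    { apply Rmult_le_reg_l with C; [lra|].
      replace (C * ((C' + ln (2 + 2 * c)) / C)) with (C' + ln (2 + 2 * c)) by (field; lra). lra. }
    assert (INR k <= A) by (rewrite kexp; apply exp_le'; auto).
    nra.
  - set (n := Datatypes.S n') in *.
    assert (n1 : 1 <= INR n) by (unfold n; rewrite S_INR; pose proof (pos_INR n'); lra).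
    assert (L2 : ln (2 + 2 * c * (INR n * INR n)) <= ln (2 + 2 * c) + 2 * ln (INR n)).
    { replace (2 * ln (INR n)) with (ln (INR n) + ln (INR n)) by ring.
      rewrite <- !ln_mult by nra. apply ln_le'; nra. }
    assert (ln (INR k) <= (C' + ln (2 + 2 * c)) / C + 2 / C * ln (INR n)).
    { apply Rmult_le_reg_l with C; [lra|].
      replace (C * ((C' + ln (2 + 2 * c)) / C + 2 / C * ln (INR n))) with (C' + ln (2 + 2 * c) + 2 * ln (INR n))
        by (field; lra). lra. }
    rewrite Rmult_1_l. unfold Rpower, A. rewrite <- exp_plus.
    assert (INR k <= exp ((C' + ln (2 + 2 * c)) / C + 2 / C * ln (INR n))) by (rewrite kexp; apply exp_le'; auto).
    pose proof (exp_pos ((C' + ln (2 + 2 * c)) / C)). lra.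
Qed.

End Chain.

End Main.


Lemma wb_iter (H : Hilbert) (f : H -> H) k : word_ball H (f :: nil) k (Nat.iter k f).
Proof.
  induction k as [|k IH].
  - simpl. auto.
  - simpl. exists f, (Nat.iter k f). split; [|split; auto].
    right; left. exists f. split; [left; auto|auto].
Qed.

Lemma ln0 : ln 0 = 0.
Proof. unfold ln. destruct (Rlt_dec 0 0) as [h|h]; [exfalso; exact (Rlt_irrefl 0 h)|reflexivity]. Qed.

Lemma Rpower1_le x : 0 <= x -> Rpower x 1 <= x + 1.
Proof.
  intros [h|h].
  - rewrite Rpower_1; lra.
  - subst. unfold Rpower. rewrite ln0, Rmult_0_r, exp_0. lra.
Qed.

Theorem theorem4p1 (H : Hilbert) (e0 : H) (he0 : hip e0 e0 = 1)
  (G : (H -> H) -> Prop) (hG : isom_group H e0 G)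
  (f : H -> H) (hfG : G f) (hf : parabolic H e0 f)
  (xi : H) (hxi : fixes_boundary H e0 f xi)
  (C C' : R) (x0 : H) (hC : 0 < C) (hC' : 0 < C') (hx0 : hyp H e0 x0)
  (hgrowth : exists N : nat, forall n : nat, (N <= n)%nat ->
      hdist H e0 (Nat.iter n f x0) x0 >= C * ln (INR n) - C')
  (hhoro : exists eps, 0 < eps /\ forall g, G g ->
      (forall v, (exists w, horoball H e0 xi eps w /\ g w = v) <-> horoball H e0 xi eps v) \/
      (forall v, ~ ((exists w, horoball H e0 xi eps w /\ g w = v) /\ horoball H e0 xi eps v))) :
  distortion_at_most H G f (2 / C) /\ C <= 2 /\ (C = 2 -> undistorted H G f).
Proof.
  destruct hhoro as (eps&heps&hB). destruct hgrowth as (N&hgr).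
  assert (FB : forall S, (forall s, In s S -> G s) -> exists A, 0 < A /\ forall n k, word_ball H S n (Nat.iter k f) ->
    INR k <= A * Rpower (1 * INR n) (2 / C) + (A + INR N)).
  { intros S HS. exact (final_bound H e0 he0 G hG f hfG xi hxi x0 hx0 eps heps hB S HS C C' N hC hgr). }
  pose proof (pos_INR N).
  split; [|split].
  - intros S HS _. destruct (FB S HS) as (A&A0&HA). exists A, 1, (A + INR N). split; [auto|split; [lra|]]. exact HA.
  - destruct (Rle_or_lt C 2) as [ok|C2]; [exact ok|exfalso].
    assert (HS : forall s, In s (f :: nil) -> G s) by (intros s [<-|[]]; auto).
    destruct (FB _ HS) as (A&A0&HA).
    set (q := 1 - 2 / C).
    assert (q0 : 0 < q).
    { unfold q. assert (2 / C < 1); [|lra]. apply Rmult_lt_reg_r with C; [lra|].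
      unfold Rdiv. rewrite Rmult_assoc, Rinv_l; lra. }
    set (T := exp (ln (2 * A + 1) / q)).
    destruct (INR_unbounded (Rmax T (2 * (A + INR N) + 1))) as [k Hk].
    pose proof (Rmax_l T (2 * (A + INR N) + 1)). pose proof (Rmax_r T (2 * (A + INR N) + 1)).
    specialize (HA k k (wb_iter H f k)). rewrite Rmult_1_l in HA.
    set (x := INR k) in *.
    assert (xpos : 0 < x) by lra.
    assert (Tp : 0 < T) by apply exp_pos.
    assert (lx : ln (2 * A + 1) / q <= ln x).
    { unfold T in *. rewrite <- (ln_exp (ln (2 * A + 1) / q)). apply ln_le'; [apply exp_pos|lra]. }
    set (u := Rpower x (2 / C)). set (v := Rpower x q).
    assert (uv : u * v = x).
    { unfold u, v, Rpower. rewrite <- exp_plus. replace (2 / C * ln x + q * ln x) with (ln x) by (unfold q; ring).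
      apply exp_ln; auto. }
    assert (v1 : 2 * A + 1 <= v).
    { unfold v, Rpower. rewrite <- (exp_ln (2 * A + 1)) at 1 by lra. apply exp_le'.
      apply Rmult_le_reg_l with (/ q). apply Rinv_0_lt_compat; auto.
      rewrite <- Rmult_assoc, Rinv_l, Rmult_1_l by lra. rewrite Rmult_comm. exact lx. }
    assert (u0 : 0 < u) by apply exp_pos.
    assert (A * u * (2 * A + 1) <= A * x) by (rewrite <- uv; replace (A * (u * v)) with (A * u * v) by ring; apply Rmult_le_compat_l; [apply Rmult_le_pos; lra|lra]).
    assert (A * u < x / 2) by nra.
    fold u in HA. lra.
  - intros C2 S HS _. subst C. destruct (FB S HS) as (A&A0&HA).
    exists A, 1, (2 * A + INR N). split; [auto|split; [lra|]].
    intros n k W. specialize (HA n k W). replace (2 / 2) with 1 in HA by field.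
    pose proof (Rpower1_le (1 * INR n) ltac:(pose proof (pos_INR n); lra)). nra.
Qed.
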